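(* Let $p,q,r\in\mathbb R$ satisfy $pq=0$, $pr=0$ and $r(q+2r)=0$. Then the relations $$de^j=r\sum_{s=1}^3(e_j\lrcorner\omega_s)\wedge w^s\ (j=1,\dots,4),\qquad dw^s=p\,\omega_s+q\,w_s\lrcorner w^{123}\ (s=1,2,3)$$ are the structure equations of a $7$-dimensional Lie algebra (with dual basis $e^1,\dots,e^4,w^1,w^2,w^3$), and the $\mathrm{SO}(4)$-structure with adapted coframe $e^1,\dots,e^4,w^1,w^2,w^3$ has invariant intrinsic torsion.
   Context: Here $e_1,\dots,e_4,w_1,w_2,w_3$ is the dual basis, $\lrcorner$ is interior product, $e^{ij}=e^i\wedge e^j$, $\omega_1=e^{12}-e^{34}$, $\omega_2=e^{13}-e^{42}$, $\omega_3=e^{14}-e^{23}$ (so $w_1\lrcorner w^{123}=w^{23}$, $w_2\lrcorner w^{123}=w^{31}$, $w_3\lrcorner w^{123}=w^{12}$). The $\mathrm{SO}(4)$-structure determined by an adapted coframe is the pair $\alpha=\sum_s\omega_s\wedge w^s-3w^{123}$, $\beta=-\omega_1\wedge w^{23}-\omega_2\wedge w^{31}-\omega_3\wedge w^{12}-3e^{1234}$, with the metric making the coframe orthonormal. Identifying $2$-forms with $\mathfrak{so}(7)$ via $e^{ij}\mapsto e^i\otimes e_j-e^j\otimes e_i$ (on $\mathbb R^7$ with $w^s=e^{4+s}$), $\mathfrak{so}(4)$ is spanned by $\varpi_1=e^{12}+e^{34},\varpi_2=e^{13}+e^{42},\varpi_3=e^{14}+e^{23}$ and $\omega_1-2w^{23},\omega_2-2w^{31},\omega_3-2w^{12}$.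 The intrinsic torsion $\xi\in T^*\otimes\mathfrak{so}(4)^\perp$ is the $\mathfrak{so}(4)^\perp$-component of the Levi-Civita connection form in the adapted frame; it is invariant if it lies in the ($2$-dimensional) $\mathrm{SO}(4)$-invariant subspace of $T^*\otimes\mathfrak{so}(4)^\perp$. *)

(* Defs.v *)
(* classical reals. Indices 0..6 of the basis of R^7:
   0..3 <-> e_1..e_4,  4..6 <-> w_1..w_3  (so w^s = e^{4+s} in 1-based terms). *)
From Stdlib Require Import Reals Lra Arith.
Open Scope R_scope.

Definition form1 := nat -> R.
Definition form2 := nat -> nat -> R.   (* a k l = a(e_k, e_l) *)
Definition form3 := nat -> nat -> nat -> R.

Definition sum7 (f : nat -> R) : R :=
  f 0%nat + f 1%nat + f 2%nat + f 3%nat + f 4%nat + f 5%nat + f 6%nat.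
Definition sum3 (f : nat -> R) : R := f 1%nat + f 2%nat + f 3%nat.

Definition ee (i : nat) : form1 := fun k => if Nat.eqb k i then 1 else 0.
Definition E (j : nat) : form1 := ee (j - 1).   (* e^j, j = 1..4 *)
Definition W (s : nat) : form1 := ee (s + 3).   (* w^s, s = 1..3 *)

Definition wedge (a b : form1) : form2 := fun k l => a k * b l - a l * b k.
Definition wedge3 (a b c : form1) : form3 := fun k l m =>
  a k * (b l * c m - b m * c l) - a l * (b k * c m - b m * c k)
  + a m * (b k * c l - b l * c k).

Definition add2 (x y : form2) : form2 := fun k l => x k l + y k l.
Definition scal2 (c : R) (x : form2) : form2 := fun k l => c * x k l.
Definition zero2 : form2 := fun _ _ => 0.

Definition int2 (v : nat) (om : form2) : form1 := fun k => om v k.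
Definition int3 (v : nat) (psi : form3) : form2 := fun k l => psi v k l.

Definition omega (s : nat) : form2 :=
  match s with
  | 1%nat => add2 (wedge (E 1) (E 2)) (scal2 (-1) (wedge (E 3) (E 4)))
  | 2%nat => add2 (wedge (E 1) (E 3)) (scal2 (-1) (wedge (E 4) (E 2)))
  | 3%nat => add2 (wedge (E 1) (E 4)) (scal2 (-1) (wedge (E 2) (E 3)))
  | _ => zero2
  end.

Definition w123 : form3 := wedge3 (W 1) (W 2) (W 3).

Definition dE (r : R) (j : nat) : form2 := fun k l =>
  r * sum3 (fun s => wedge (int2 (j - 1) (omega s)) (W s) k l).
Definition dW (p q : R) (s : nat) : form2 :=
  add2 (scal2 p (omega s)) (scal2 q (int3 (s + 3) w123)).

Definition dBasis (p q r : R) (k : nat) : form2 :=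
  if Nat.ltb k 4 then dE r (k + 1) else dW p q (k - 3).

(* bracket determined by the structure equations, via
   d eta (X,Y) = - eta([X,Y]) for left-invariant eta:
   [e_i, e_j] = sum_k c i j k e_k *)
Definition bracket (p q r : R) (i j k : nat) : R := - dBasis p q r k i j.

Definition IsLieAlgebra7 (c : nat -> nat -> nat -> R) : Prop :=
  (forall i j k, (i < 7)%nat -> (j < 7)%nat -> (k < 7)%nat -> c i j k = - c j i k) /\
  (forall i j k l, (i < 7)%nat -> (j < 7)%nat -> (k < 7)%nat -> (l < 7)%nat ->
     sum7 (fun m => c i j m * c m k l + c j k m * c m i l + c k i m * c m j l) = 0).

(* Levi-Civita connection of the left-invariant metric making the basis
   orthonormal (Koszul formula): LC c i j k = < nabla_{e_i} e_j , e_k > *)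
Definition LC (c : nat -> nat -> nat -> R) (i j k : nat) : R :=
  / 2 * (c i j k - c j k i + c k i j).

(* connection form in the adapted frame, as an so(7) = Lambda^2-valued 1-form,
   using e^{jk} <-> e^j (x) e_k - e^k (x) e_j *)
Definition connForm (c : nat -> nat -> nat -> R) (i : nat) : form2 :=
  fun j k => LC c i j k.

(* spanning set of so(4) inside Lambda^2 = so(7) *)
Definition so4gen (t : nat) : form2 :=
  match t with
  | 0%nat => add2 (wedge (E 1) (E 2)) (wedge (E 3) (E 4))
  | 1%nat => add2 (wedge (E 1) (E 3)) (wedge (E 4) (E 2))
  | 2%nat => add2 (wedge (E 1) (E 4)) (wedge (E 2) (E 3))
  | 3%nat => add2 (omega 1) (scal2 (-2) (wedge (W 2) (W 3)))
  | 4%nat => add2 (omega 2) (scal2 (-2) (wedge (W 3) (W 1)))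
  | 5%nat => add2 (omega 3) (scal2 (-2) (wedge (W 1) (W 2)))
  | _ => zero2
  end.

(* standard inner product on 2-forms (the e^{jk}, j<k, orthonormal) *)
Definition ip2 (a b : form2) : R :=
  / 2 * sum7 (fun j => sum7 (fun k => a j k * b j k)).

(* orthogonal projection onto so(4)^perp; the six generators are pairwise
   orthogonal, so this is the standard orthogonal projection *)
Definition projPerp (a : form2) : form2 := fun j k =>
  a j k - (ip2 a (so4gen 0) / ip2 (so4gen 0) (so4gen 0) * so4gen 0 j k
         + ip2 a (so4gen 1) / ip2 (so4gen 1) (so4gen 1) * so4gen 1 j k
         + ip2 a (so4gen 2) / ip2 (so4gen 2) (so4gen 2) * so4gen 2 j k
         + ip2 a (so4gen 3) / ip2 (so4gen 3) (so4gen 3) * so4gen 3 j k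
         + ip2 a (so4gen 4) / ip2 (so4gen 4) (so4gen 4) * so4gen 4 j k
         + ip2 a (so4gen 5) / ip2 (so4gen 5) (so4gen 5) * so4gen 5 j k).

Definition intrinsicTorsion (c : nat -> nat -> nat -> R) (i : nat) : form2 :=
  projPerp (connForm c i).

Definition InSo4 (A : form2) : Prop :=
  exists x : nat -> R, forall j k, (j < 7)%nat -> (k < 7)%nat ->
    A j k = x 0%nat * so4gen 0 j k + x 1%nat * so4gen 1 j k + x 2%nat * so4gen 2 j k
          + x 3%nat * so4gen 3 j k + x 4%nat * so4gen 4 j k + x 5%nat * so4gen 5 j k.

(* infinitesimal action of A in so(7) (A e_a = sum_b A a b e_b) on
   xi in T^* (x) Lambda^2 T^*, xi i j k = xi(e_i)(e_j, e_k) *)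
Definition actT (A : form2) (xi : nat -> form2) (i j k : nat) : R :=
  - sum7 (fun m => A i m * xi m j k + A j m * xi i m k + A k m * xi i j m).

(* invariance under SO(4) (connected, so equivalent to annihilation by so(4)) *)
Definition IsSO4Invariant (xi : nat -> form2) : Prop :=
  forall A, InSo4 A -> forall i j k, (i < 7)%nat -> (j < 7)%nat -> (k < 7)%nat ->
    actT A xi i j k = 0.

(* Main.v *)
Require Import Defs.
From Stdlib Require Import Reals Lra Lia ZArith List Bool.
Open Scope R_scope.


Definition At (a b c : nat) : Z :=
 match a, b, c with
 | 0%nat, 1%nat, 4%nat => (-1)%Z
 | 0%nat, 2%nat, 5%nat => (-1)%Z
 | 0%nat, 3%nat, 6%nat => (-1)%Z
 | 1%nat, 0%nat, 4%nat => (1)%Z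
 | 1%nat, 2%nat, 6%nat => (1)%Z
 | 1%nat, 3%nat, 5%nat => (-1)%Z
 | 2%nat, 0%nat, 5%nat => (1)%Z
 | 2%nat, 1%nat, 6%nat => (-1)%Z
 | 2%nat, 3%nat, 4%nat => (1)%Z
 | 3%nat, 0%nat, 6%nat => (1)%Z
 | 3%nat, 1%nat, 5%nat => (1)%Z
 | 3%nat, 2%nat, 4%nat => (-1)%Z
 | _, _, _ => 0%Z end.

Definition Bt (a b c : nat) : Z :=
 match a, b, c with
 | 4%nat, 5%nat, 6%nat => (-1)%Z
 | 4%nat, 6%nat, 5%nat => (1)%Z
 | 5%nat, 4%nat, 6%nat => (1)%Z
 | 5%nat, 6%nat, 4%nat => (-1)%Z
 | 6%nat, 4%nat, 5%nat => (-1)%Z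
 | 6%nat, 5%nat, 4%nat => (1)%Z
 | _, _, _ => 0%Z end.

Definition Ct (a b c : nat) : Z :=
 match a, b, c with
 | 0%nat, 4%nat, 1%nat => (1)%Z
 | 0%nat, 5%nat, 2%nat => (1)%Z
 | 0%nat, 6%nat, 3%nat => (1)%Z
 | 1%nat, 4%nat, 0%nat => (-1)%Z
 | 1%nat, 5%nat, 3%nat => (1)%Z
 | 1%nat, 6%nat, 2%nat => (-1)%Z
 | 2%nat, 4%nat, 3%nat => (-1)%Z
 | 2%nat, 5%nat, 0%nat => (-1)%Z
 | 2%nat, 6%nat, 1%nat => (1)%Z
 | 3%nat, 4%nat, 2%nat => (1)%Z
 | 3%nat, 5%nat, 1%nat => (-1)%Z
 | 3%nat, 6%nat, 0%nat => (-1)%Z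
 | 4%nat, 0%nat, 1%nat => (-1)%Z
 | 4%nat, 1%nat, 0%nat => (1)%Z
 | 4%nat, 2%nat, 3%nat => (1)%Z
 | 4%nat, 3%nat, 2%nat => (-1)%Z
 | 5%nat, 0%nat, 2%nat => (-1)%Z
 | 5%nat, 1%nat, 3%nat => (-1)%Z
 | 5%nat, 2%nat, 0%nat => (1)%Z
 | 5%nat, 3%nat, 1%nat => (1)%Z
 | 6%nat, 0%nat, 3%nat => (-1)%Z
 | 6%nat, 1%nat, 2%nat => (1)%Z
 | 6%nat, 2%nat, 1%nat => (-1)%Z
 | 6%nat, 3%nat, 0%nat => (1)%Z
 | _, _, _ => 0%Z end.

Definition Gt (a b c : nat) : Z :=
 match a, b, c with
 | 0%nat, 0%nat, 1%nat => (1)%Z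
 | 0%nat, 1%nat, 0%nat => (-1)%Z
 | 0%nat, 2%nat, 3%nat => (1)%Z
 | 0%nat, 3%nat, 2%nat => (-1)%Z
 | 1%nat, 0%nat, 2%nat => (1)%Z
 | 1%nat, 1%nat, 3%nat => (-1)%Z
 | 1%nat, 2%nat, 0%nat => (-1)%Z
 | 1%nat, 3%nat, 1%nat => (1)%Z
 | 2%nat, 0%nat, 3%nat => (1)%Z
 | 2%nat, 1%nat, 2%nat => (1)%Z
 | 2%nat, 2%nat, 1%nat => (-1)%Z
 | 2%nat, 3%nat, 0%nat => (-1)%Z
 | 3%nat, 0%nat, 1%nat => (1)%Z
 | 3%nat, 1%nat, 0%nat => (-1)%Z
 | 3%nat, 2%nat, 3%nat => (-1)%Z
 | 3%nat, 3%nat, 2%nat => (1)%Z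
 | 3%nat, 5%nat, 6%nat => (-2)%Z
 | 3%nat, 6%nat, 5%nat => (2)%Z
 | 4%nat, 0%nat, 2%nat => (1)%Z
 | 4%nat, 1%nat, 3%nat => (1)%Z
 | 4%nat, 2%nat, 0%nat => (-1)%Z
 | 4%nat, 3%nat, 1%nat => (-1)%Z
 | 4%nat, 4%nat, 6%nat => (2)%Z
 | 4%nat, 6%nat, 4%nat => (-2)%Z
 | 5%nat, 0%nat, 3%nat => (1)%Z
 | 5%nat, 1%nat, 2%nat => (-1)%Z
 | 5%nat, 2%nat, 1%nat => (1)%Z
 | 5%nat, 3%nat, 0%nat => (-1)%Z
 | 5%nat, 4%nat, 5%nat => (-2)%Z
 | 5%nat, 5%nat, 4%nat => (2)%Z
 | _, _, _ => 0%Z end.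

Definition cst (p q r : R) (i j k : nat) : R :=
  p * IZR (At i j k) + q * IZR (Bt i j k) + r * IZR (Ct i j k).

Lemma lt7 (i : nat) : (i < 7)%nat ->
  i = 0%nat \/ i = 1%nat \/ i = 2%nat \/ i = 3%nat \/ i = 4%nat \/ i = 5%nat \/ i = 6%nat.
Proof. intro; lia. Qed.

Ltac d7 i H := destruct (lt7 i H) as [ -> | [ -> | [ -> | [ -> | [ -> | [ -> | -> ] ] ] ] ] ].

Lemma BT p q r i j k : (i<7)%nat -> (j<7)%nat -> (k<7)%nat ->
  bracket p q r i j k = cst p q r i j k.
Proof.
  intros Hi Hj Hk; d7 i Hi; d7 j Hj; d7 k Hk;
  unfold cst, bracket, dBasis, dE, dW, sum3, int2, int3, w123, wedge3, omega, add2, scal2, wedge, W, E, ee, zero2;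
  cbn -[IZR]; ring.
Qed.

Definition sZ7 (f : nat -> Z) : Z := (f 0%nat + f 1%nat + f 2%nat + f 3%nat + f 4%nat + f 5%nat + f 6%nat)%Z.
Definition JZ (X Y : nat -> nat -> nat -> Z) (i j k l : nat) : Z :=
  sZ7 (fun m => X i j m * Y m k l + X j k m * Y m i l + X k i m * Y m j l)%Z.
Definition all7 (f : nat -> bool) : bool := forallb f (seq 0 7).
Lemma all7_spec f : all7 f = true -> forall i, (i < 7)%nat -> f i = true.
Proof.
  unfold all7; rewrite forallb_forall; intros H i Hi; apply H; apply in_seq; lia.
Qed.

Definition jcheck : bool :=
  all7 (fun i => all7 (fun j => all7 (fun k => all7 (fun l =>
    Z.eqb (JZ At At i j k l) 0 && Z.eqb (JZ Bt Bt i j k l) 0 &&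
    Z.eqb (JZ Ct Ct i j k l) (2 * (JZ Bt Ct i j k l + JZ Ct Bt i j k l)))))).
Lemma jcheck_ok : jcheck = true. Proof. vm_compute. reflexivity. Qed.

Lemma jfacts i j k l : (i<7)%nat -> (j<7)%nat -> (k<7)%nat -> (l<7)%nat ->
  JZ At At i j k l = 0%Z /\ JZ Bt Bt i j k l = 0%Z /\
  JZ Ct Ct i j k l = (2 * (JZ Bt Ct i j k l + JZ Ct Bt i j k l))%Z.
Proof.
  intros Hi Hj Hk Hl.
  pose proof (all7_spec _ jcheck_ok i Hi) as H1.
  pose proof (all7_spec _ H1 j Hj) as H2.
  pose proof (all7_spec _ H2 k Hk) as H3.
  pose proof (all7_spec _ H3 l Hl) as H4.
  apply andb_prop in H4 as [H4 H6]; apply andb_prop in H4 as [H4 H5].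
  apply Z.eqb_eq in H4, H5, H6. auto.
Qed.

Lemma jreal p q r i j k l :
  sum7 (fun m => cst p q r i j m * cst p q r m k l + cst p q r j k m * cst p q r m i l + cst p q r k i m * cst p q r m j l)
  = p*p*IZR (JZ At At i j k l) + q*q*IZR (JZ Bt Bt i j k l) + r*r*IZR (JZ Ct Ct i j k l)
    + p*q*IZR (JZ At Bt i j k l + JZ Bt At i j k l) + p*r*IZR (JZ At Ct i j k l + JZ Ct At i j k l)
    + q*r*IZR (JZ Bt Ct i j k l + JZ Ct Bt i j k l).
Proof. unfold sum7, JZ, sZ7, cst; rewrite !plus_IZR, !mult_IZR; ring. Qed.

Lemma cst_lie p q r (hpq : p * q = 0) (hpr : p * r = 0) (hr : r * (q + 2 * r) = 0) :
  IsLieAlgebra7 (cst p q r).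
Proof.
  split.
  - intros i j k Hi Hj Hk; d7 i Hi; d7 j Hj; d7 k Hk; unfold cst; cbn -[IZR]; ring.
  - intros i j k l Hi Hj Hk Hl; rewrite jreal.
    destruct (jfacts i j k l Hi Hj Hk Hl) as [-> [-> ->]].
    rewrite mult_IZR, plus_IZR.
    set (U := IZR (JZ Bt Ct i j k l)); set (V := IZR (JZ Ct Bt i j k l)).
    replace (p * p * IZR 0 + q * q * IZR 0 + r * r * (IZR 2 * (U + V)) +
      p * q * IZR (JZ At Bt i j k l + JZ Bt At i j k l) +
      p * r * IZR (JZ At Ct i j k l + JZ Ct At i j k l) + q * r * (U + V))
      with ((p*q) * IZR (JZ At Bt i j k l + JZ Bt At i j k l) + (p*r) * IZR (JZ At Ct i j k l + JZ Ct At i j k l) + (r * (q + 2*r)) * (U+V)) by ring.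
    rewrite hpq, hpr, hr; ring.
Qed.

Ltac pushZ := repeat first [rewrite plus_IZR | rewrite mult_IZR | rewrite minus_IZR | rewrite opp_IZR].

Lemma SG t j k : (t<6)%nat -> (j<7)%nat -> (k<7)%nat -> so4gen t j k = IZR (Gt t j k).
Proof. idtac "start".
  intros Ht Hj Hk.
  assert (Ht' : (t < 7)%nat) by lia.
  d7 j Hj; d7 k Hk; d7 t Ht'; try lia;
  unfold so4gen, omega, add2, scal2, wedge, W, E, ee; cbn -[IZR]; ring.
Qed.

Lemma NG t : (t < 6)%nat -> ip2 (so4gen t) (so4gen t) = if Nat.ltb t 3 then 2 else 6.
Proof. idtac "start".
  intro Ht; unfold ip2, sum7; rewrite !SG by lia.
  assert (Ht' : (t < 7)%nat) by lia. d7 t Ht'; try lia; cbn -[IZR]; field.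
Qed.


Definition IPZ (X : nat -> nat -> nat -> Z) (i t : nat) : Z :=
  sZ7 (fun j => sZ7 (fun k => (X i j k - X j k i + X k i j) * Gt t j k))%Z.
Definition XZ (X : nat -> nat -> nat -> Z) (i j k : nat) : Z :=
  (12 * (X i j k - X j k i + X k i j) -
   (3 * IPZ X i 0 * Gt 0 j k + 3 * IPZ X i 1 * Gt 1 j k + 3 * IPZ X i 2 * Gt 2 j k
    + IPZ X i 3 * Gt 3 j k + IPZ X i 4 * Gt 4 j k + IPZ X i 5 * Gt 5 j k))%Z.
Definition TZ (X : nat -> nat -> nat -> Z) (t i j k : nat) : Z :=
  (- sZ7 (fun m => Gt t i m * XZ X m j k + Gt t j m * XZ X i m k + Gt t k m * XZ X i j m))%Z.

Definition gR (t j k : nat) : R := IZR (Gt t j k).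
Definition IPR (a : nat -> nat -> nat -> R) (i t : nat) : R :=
  sum7 (fun j => sum7 (fun k => (a i j k - a j k i + a k i j) * gR t j k)).
Definition XR (a : nat -> nat -> nat -> R) (i j k : nat) : R :=
  12 * (a i j k - a j k i + a k i j) -
   (3 * IPR a i 0 * gR 0 j k + 3 * IPR a i 1 * gR 1 j k + 3 * IPR a i 2 * gR 2 j k
    + IPR a i 3 * gR 3 j k + IPR a i 4 * gR 4 j k + IPR a i 5 * gR 5 j k).
Definition TR (a : nat -> nat -> nat -> R) (t i j k : nat) : R :=
  - sum7 (fun m => gR t i m * XR a m j k + gR t j m * XR a i m k + gR t k m * XR a i j m).
Definition zR (X : nat -> nat -> nat -> Z) (i j k : nat) : R := IZR (X i j k).

Lemma sum7_ext f g : (forall m, f m = g m) -> sum7 f = sum7 g.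
Proof. intro H; unfold sum7; rewrite !H; reflexivity. Qed.
Lemma sum7_IZR f : sum7 (fun m => IZR (f m)) = IZR (sZ7 f).
Proof. unfold sum7, sZ7; pushZ; reflexivity. Qed.

Lemma IPR_Z X i t : IPR (zR X) i t = IZR (IPZ X i t).
Proof. idtac "start".
  unfold IPR, IPZ. rewrite <- sum7_IZR. apply sum7_ext; intro j.
  rewrite <- sum7_IZR. apply sum7_ext; intro k. unfold zR, gR. pushZ. reflexivity.
Qed.
Lemma XR_Z X i j k : XR (zR X) i j k = IZR (XZ X i j k).
Proof. unfold XR, XZ. rewrite !IPR_Z. unfold zR, gR. pushZ. reflexivity. Qed.
Lemma TR_Z X t i j k : TR (zR X) t i j k = IZR (TZ X t i j k).
Proof. idtac "start".
  unfold TR, TZ. rewrite opp_IZR, <- sum7_IZR. f_equal. apply sum7_ext; intro m.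
  rewrite !XR_Z. unfold gR. pushZ. reflexivity.
Qed.

Lemma sum7_ext_lt f g : (forall m, (m < 7)%nat -> f m = g m) -> sum7 f = sum7 g.
Proof. intro H; unfold sum7; rewrite !H by lia; reflexivity. Qed.
Lemma sum7_L (c a b d : R) f g h :
  sum7 (fun m => c * (a * f m + b * g m + d * h m)) = c * (a * sum7 f + b * sum7 g + d * sum7 h).
Proof. unfold sum7; cbv beta; ring. Qed.

Lemma IP p q r i t : (t < 6)%nat ->
  ip2 (connForm (cst p q r) i) (so4gen t) =
  / 4 * (p * IPR (zR At) i t + q * IPR (zR Bt) i t + r * IPR (zR Ct) i t).
Proof.
  intro Ht; unfold ip2.
  transitivity (/ 2 * sum7 (fun j => / 2 * (p * sum7 (fun k => (zR At i j k - zR At j k i + zR At k i j) * gR t j k)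
     + q * sum7 (fun k => (zR Bt i j k - zR Bt j k i + zR Bt k i j) * gR t j k)
     + r * sum7 (fun k => (zR Ct i j k - zR Ct j k i + zR Ct k i j) * gR t j k)))).
  - f_equal. apply sum7_ext_lt; intros j Hj. rewrite <- sum7_L. apply sum7_ext_lt; intros k Hk.
    unfold connForm, LC, cst, zR. rewrite SG by lia. unfold gR. ring.
  - rewrite sum7_L. unfold IPR. field.
Qed.

Lemma XI p q r i j k : (j<7)%nat -> (k<7)%nat ->
  intrinsicTorsion (cst p q r) i j k =
  / 24 * (p * XR (zR At) i j k + q * XR (zR Bt) i j k + r * XR (zR Ct) i j k).
Proof. idtac "start".
  intros Hj Hk; unfold intrinsicTorsion, projPerp.
  rewrite !IP by lia. rewrite !NG by lia. cbn [Nat.ltb Nat.leb].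
  unfold connForm, LC; rewrite !SG by lia.
  unfold XR, cst, zR, gR. field.
Qed.

Lemma ACT p q r t i j k : (t<6)%nat -> (i<7)%nat -> (j<7)%nat -> (k<7)%nat ->
  actT (so4gen t) (intrinsicTorsion (cst p q r)) i j k =
  / 24 * (p * TR (zR At) t i j k + q * TR (zR Bt) t i j k + r * TR (zR Ct) t i j k).
Proof. idtac "start".
  intros Ht Hi Hj Hk; unfold actT, sum7; rewrite !SG by lia; rewrite !XI by lia.
  unfold TR, sum7, gR. field.
Qed.

Definition tcheck : bool :=
  all7 (fun t => (6 <=? t)%nat || all7 (fun i => all7 (fun j => all7 (fun k =>
    Z.eqb (TZ At t i j k) 0 && Z.eqb (TZ Bt t i j k) 0 && Z.eqb (TZ Ct t i j k) 0)))).
Lemma tcheck_ok : tcheck = true. Proof. vm_compute. reflexivity. Qed.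

Lemma tfacts t i j k : (t<6)%nat -> (i<7)%nat -> (j<7)%nat -> (k<7)%nat ->
  TR (zR At) t i j k = 0 /\ TR (zR Bt) t i j k = 0 /\ TR (zR Ct) t i j k = 0.
Proof.
  intros Ht Hi Hj Hk. rewrite !TR_Z.
  assert (Ht' : (t < 7)%nat) by lia.
  pose proof (all7_spec _ tcheck_ok t Ht') as H0.
  apply orb_prop in H0 as [H0|H0]; [apply Nat.leb_le in H0; lia|].
  pose proof (all7_spec _ H0 i Hi) as H1.
  pose proof (all7_spec _ H1 j Hj) as H2.
  pose proof (all7_spec _ H2 k Hk) as H4.
  apply andb_prop in H4 as [H4 H6]; apply andb_prop in H4 as [H4 H5].
  apply Z.eqb_eq in H4, H5, H6. rewrite H4, H5, H6. auto.
Qed.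

Lemma ACT0 p q r t i j k : (t<6)%nat -> (i<7)%nat -> (j<7)%nat -> (k<7)%nat ->
  actT (so4gen t) (intrinsicTorsion (cst p q r)) i j k = 0.
Proof.
  intros Ht Hi Hj Hk. rewrite ACT by lia.
  destruct (tfacts t i j k Ht Hi Hj Hk) as [-> [-> ->]]. ring.
Qed.

Lemma TL1 (c c' : nat -> nat -> nat -> R) :
  (forall i j k, (i<7)%nat -> (j<7)%nat -> (k<7)%nat -> c i j k = c' i j k) ->
  IsLieAlgebra7 c' -> IsLieAlgebra7 c.
Proof.
  intros H [H1 H2]; split.
  - intros i j k Hi Hj Hk; rewrite !H by lia; auto.
  - intros i j k l Hi Hj Hk Hl; generalize (H2 i j k l Hi Hj Hk Hl);
    unfold sum7; rewrite !H by lia; auto.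
Qed.

Lemma IPeq (c c' : nat -> nat -> nat -> R) :
  (forall i j k, (i<7)%nat -> (j<7)%nat -> (k<7)%nat -> c i j k = c' i j k) ->
  forall i b, (i < 7)%nat -> ip2 (connForm c i) b = ip2 (connForm c' i) b.
Proof.
  intros H i b Hi; unfold ip2; f_equal. apply sum7_ext_lt; intros j Hj.
  apply sum7_ext_lt; intros k Hk. unfold connForm, LC. rewrite !H by lia. reflexivity.
Qed.

Lemma XT (c c' : nat -> nat -> nat -> R) :
  (forall i j k, (i<7)%nat -> (j<7)%nat -> (k<7)%nat -> c i j k = c' i j k) ->
  forall i j k, (i<7)%nat -> (j<7)%nat -> (k<7)%nat ->
  intrinsicTorsion c i j k = intrinsicTorsion c' i j k.
Proof.
  intros H i j k Hi Hj Hk. unfold intrinsicTorsion, projPerp.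
  rewrite !(IPeq c c' H i _ Hi). unfold connForm, LC. rewrite !H by lia. reflexivity.
Qed.

Theorem mainTheorem14 (p q r : R)
  (hpq : p * q = 0) (hpr : p * r = 0) (hr : r * (q + 2 * r) = 0) :
  IsLieAlgebra7 (bracket p q r) /\
  IsSO4Invariant (intrinsicTorsion (bracket p q r)).
Proof.
  assert (HB : forall i j k, (i<7)%nat -> (j<7)%nat -> (k<7)%nat -> bracket p q r i j k = cst p q r i j k)
    by (intros; apply BT; auto).
  split.
  - apply (TL1 _ _ HB). apply cst_lie; auto.
  - intros A [x Hx] i j k Hi Hj Hk.
    assert (E : actT A (intrinsicTorsion (bracket p q r)) i j k =
      x 0%nat * actT (so4gen 0) (intrinsicTorsion (cst p q r)) i j k
      + x 1%nat * actT (so4gen 1) (intrinsicTorsion (cst p q r)) i j k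
      + x 2%nat * actT (so4gen 2) (intrinsicTorsion (cst p q r)) i j k
      + x 3%nat * actT (so4gen 3) (intrinsicTorsion (cst p q r)) i j k
      + x 4%nat * actT (so4gen 4) (intrinsicTorsion (cst p q r)) i j k
      + x 5%nat * actT (so4gen 5) (intrinsicTorsion (cst p q r)) i j k).
    { unfold actT, sum7. rewrite !(XT _ _ HB) by lia. rewrite !Hx by lia. ring. }
    rewrite E. rewrite !ACT0 by lia. ring.
Qed.
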